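(* Let $a,b>-1$, $n\ge2$, and $\lambda$ a partition with $\ell(\lambda)\le n$. In the expansion $$\mathfrak P_\lambda(x_1,\dots,x_{n-1},1;a,b)=\sum_{\nu:\ \ell(\nu)\le n-1}c_{\lambda\nu}\,\mathfrak P_\nu(x_1,\dots,x_{n-1};a,b)$$ all coefficients $c_{\lambda\nu}$ are nonnegative.
   Context: $\mathfrak p_l(x;a,b)$ ($l\ge0$) are the classical Jacobi polynomials orthogonal on $[-1,1]$ with weight $(1-x)^a(1+x)^b$, normalized by $\mathfrak p_l(x;a,b)=\frac{\Gamma(l+a+1)}{\Gamma(l+1)\Gamma(a+1)}{}_2F_1(-l,l+a+b+1;a+1;\frac{1-x}2)$. For $m\ge1$ and a partition $\nu$ with $\ell(\nu)\le m$, $\mathfrak P_\nu(x_1,\dots,x_m;a,b)=\det_{1\le i,j\le m}[\mathfrak p_{\nu_i+m-i}(x_j;a,b)]/\prod_{1\le i<j\le m}(x_i-x_j)$. These form a basis of symmetric polynomials in $x_1,\dots,x_m$, so the expansion exists and is unique. *)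

(* Defs.v *)
From mathcomp Require Import all_boot all_order all_algebra.
From mathcomp Require Import reals.
Set Implicit Arguments. Unset Strict Implicit. Unset Printing Implicit Defensive.
Import Order.TTheory GRing.Theory Num.Theory.
Local Open Scope ring_scope.

Definition poch (R : ringType) (x : R) (k : nat) : R :=
  \prod_(i < k) (x + i%:R).

(* Classical Jacobi polynomial p_l(x;a,b) =
   Gamma(l+a+1)/(Gamma(l+1)Gamma(a+1)) 2F1(-l, l+a+b+1; a+1; (1-x)/2),
   with Gamma(l+a+1)/Gamma(a+1) = (a+1)_l, Gamma(l+1) = l!, and the
   terminating 2F1 series written out (terms k > l vanish since (-l)_k = 0). *)
Definition jacobi (R : realType) (a b : R) (l : nat) (x : R) : R :=
  poch (a + 1) l / (l`!)%:R *
  \sum_(k < l.+1)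
     (poch (- (l%:R)) k * poch (l%:R + a + b + 1) k)
       / (poch (a + 1) k * (k`!)%:R) * ((1 - x) / 2) ^+ k.

(* A partition with at most m parts, padded with zeros to length m:
   nu = [nu_1; ...; nu_m] with nu_1 >= ... >= nu_m >= 0. *)
Definition is_partition (m : nat) (nu : seq nat) : bool :=
  (size nu == m) && sorted geq nu.

Definition multiJacobi (R : realType) (a b : R) (m : nat) (nu : seq nat)
    (x : nat -> R) : R :=
  \det (\matrix_(i < m, j < m) jacobi a b (nth 0%N nu i + (m - i.+1))%N (x j))
  / \prod_(i < m) \prod_(j < m | (i < j)%N) (x i - x j).

(* Main.v *)
Require Import Defs.
From mathcomp Require Import all_boot all_order all_algebra.
From mathcomp Require Import reals.
From mathcomp Require Import perm ring lra zify.
Set Implicit Arguments. Unset Strict Implicit. Unset Printing Implicit Defensive.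
Import Order.TTheory GRing.Theory Num.Theory.
Local Open Scope ring_scope.


Section Poch.
Variable R : realType.

Lemma pochS (x : R) n : poch x n.+1 = poch x n * (x + n%:R).
Proof. by rewrite /poch big_ord_recr. Qed.

Lemma pochSl (x y : R) n : y = x + 1 -> poch x n.+1 = x * poch y n.
Proof.
move=> ->; rewrite /poch big_ord_recl addr0; congr (_ * _).
by apply: eq_bigr => i _; rewrite lift0 -addn1 natrD; ring.
Qed.

Lemma poch0 (x : R) : poch x 0 = 1.
Proof. by rewrite /poch big_ord0. Qed.

Lemma poch_gt0 (x : R) n : 0 < x -> 0 < poch x n.
Proof.
move=> hx; rewrite /poch; apply: prodr_gt0 => i _.
have := ler0n R i; lra.
Qed.

Lemma poch_negn (l k : nat) : (l < k)%N -> poch (- (l%:R) : R) k = 0.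
Proof.
move=> lk; rewrite /poch (bigD1 (Ordinal lk)) //= addNr mul0r //.
Qed.

End Poch.

Section Jac.
Variable R : realType.
Variables a b : R.
Hypothesis ha : -1 < a.
Hypothesis hb : -1 < b.

Definition NN := a + b + 1.
Definition cf (l k : nat) : R :=
  (poch (- (l%:R)) k * poch (l%:R + a + b + 1) k) / (poch (a + 1) k * (k`!)%:R).
Definition Rf (l : nat) (x : R) : R :=
  \sum_(k < l.+1) cf l k * ((1 - x) / 2) ^+ k.
Definition hh (l : nat) : R := poch (a + 1) l / (l`!)%:R.

Lemma jacobiE l x : jacobi a b l x = hh l * Rf l x.
Proof. by []. Qed.

Definition uu (m : nat) : R :=
  (2 * m%:R + NN + 1) * (m`!)%:R * poch (b + 1) m /
  (2 * poch (a + 1) m.+1 * poch (NN + 1) m).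
Definition ww (j : nat) : R :=
  match j with 0 => 1 | j'.+1 => poch (NN + 1) j' * (NN + 2 * j%:R) end.
Definition vv (k : nat) : R :=
  ww k * poch (a + 1) k / (poch (b + 1) k * (k`!)%:R).
Definition TT (m : nat) (x : R) : R := \sum_(k < m.+1) vv k * Rf k x.

Lemma cf0 l : cf l 0 = 1.
Proof. by rewrite /cf !poch0 !mul1r invr1. Qed.

Lemma cf_big l k : (l < k)%N -> cf l k = 0.
Proof. by move=> lk; rewrite /cf poch_negn // !mul0r. Qed.

Lemma Rf_ext l K x : (l < K)%N ->
  Rf l x = \sum_(k < K) cf l k * ((1 - x) / 2) ^+ k.
Proof.
move=> lK; rewrite /Rf.
have E n : \sum_(k < n) cf l k * ((1 - x) / 2) ^+ k =
  \sum_(0 <= k < n) cf l k * ((1 - x) / 2) ^+ k by rewrite big_mkord.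
rewrite !E.
rewrite [RHS](big_cat_nat _ (n := l.+1)) //=.
rewrite -[LHS]addr0; congr (_ + _); symmetry.
rewrite big_nat_cond big1 //.
move=> k; rewrite andbT => /andP [lk _].
by rewrite cf_big // mul0r.
Qed.

Let pa : 0 < a + 1. Proof. have := ha; lra. Qed.
Let pb : 0 < b + 1. Proof. have := hb; lra. Qed.
Let pN : 0 < NN + 1. Proof. have := ha; have := hb; rewrite /NN; lra. Qed.

Lemma uu_gt0 m : 0 < uu m.
Proof.
rewrite /uu; apply: divr_gt0; last first.
  by rewrite !mulr_gt0 ?poch_gt0.
have := ler0n R m; have := ltr0n R (m`!) ; rewrite fact_gt0 => f0 m0.
rewrite !mulr_gt0 ?poch_gt0 //; have := ha; have := hb; rewrite /NN; lra.
Qed.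

Lemma vv_gt0 k : 0 < vv k.
Proof.
rewrite /vv; apply: divr_gt0; last first.
  by rewrite !mulr_gt0 ?poch_gt0 // ltr0n fact_gt0.
apply: mulr_gt0; last by rewrite poch_gt0.
case: k => [|j] /=; first by rewrite ltr01.
rewrite mulr_gt0 ?poch_gt0 //.
have := ler0n R j; have := ha; have := hb; rewrite /NN -addn1 natrD; lra.
Qed.


Lemma pochSl2 (x y : R) n : y = x + 2 -> poch x n.+2 = x * (x + 1) * poch y n.
Proof.
move=> ->; rewrite (pochSl (y := x + 1)) // (pochSl (y := x + 2)) ?mulrA //.
by rewrite -addrA -[2]/(1 + 1) .
Qed.

Lemma poch1 (x : R) : poch x 1 = x.
Proof. by rewrite pochS poch0 mul1r addr0. Qed.

Ltac pos_tac m :=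
  let h1 := fresh in
  have h1 := ler0n R m;
  repeat (apply/andP; split);
  apply: lt0r_neq0;
  first [ by rewrite ltr0n fact_gt0
        | apply: poch_gt0; move: h1 (ha) (hb); rewrite /NN; lra
        | move: h1 (ha) (hb); rewrite /NN; lra ].
Ltac pos_tac2 m j :=
  let h1 := fresh in let h2 := fresh in
  have h1 := ler0n R m; have h2 := ler0n R j;
  repeat (apply/andP; split);
  apply: lt0r_neq0;
  first [ by rewrite ltr0n fact_gt0
        | apply: poch_gt0; move: h1 h2 (ha) (hb); rewrite /NN; lra
        | move: h1 h2 (ha) (hb); rewrite /NN; lra ].

Lemma coef_id m k :
  cf m.+2 k.+1 - cf m.+1 k.+1 =
  uu m.+1 / uu m * (cf m.+1 k.+1 - cf m k.+1) - 2 * uu m.+1 * vv m.+1 * cf m.+1 k.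
Proof.
have ua := uu_gt0 m; have ub := uu_gt0 m.+1.
rewrite /uu /vv /ww /NN in ua ub *.
case: k => [|j].
  rewrite /cf !poch1 !poch0 /= !pochS !factS fact0 !natrM.
  by field; pos_tac m.
rewrite /cf.
rewrite (pochSl2 (x := - (m.+2)%:R) (y := - (m%:R))); last ring.
rewrite (pochSl (x := - (m.+1)%:R) (y := - (m%:R)) j.+1); last ring.
rewrite (pochSl (x := - (m.+1)%:R) (y := - (m%:R)) j); last ring.
rewrite (pochSl (x := (m.+1)%:R + a + b + 1) (y := (m.+2)%:R + a + b + 1) j.+1); last ring.
rewrite (pochSl (x := (m.+1)%:R + a + b + 1) (y := (m.+2)%:R + a + b + 1) j); last ring.
rewrite (pochSl2 (x := m%:R + a + b + 1) (y := (m.+2)%:R + a + b + 1) j); last ring.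
rewrite !pochS !factS !natrM.
by field; pos_tac2 m j.
Qed.


Lemma key m x : Rf m.+1 x - Rf m x = (x - 1) * (uu m * TT m x).
Proof.
set t : R := (1 - x) / 2.
have xt : x - 1 = -2 * t by rewrite /t; field.
elim: m => [|m IH].
  rewrite /TT /Rf /uu !big_ord_recl !big_ord0 !cf0 /= /cf !poch1 !poch0 /vv /ww.
  rewrite !poch0 (_ : bump 0 0 = 1%N) // fact0 !expr0 expr1 -/t xt.
  rewrite /NN (_ : 1`! = 1%N) //; field; have := pa; have := ha; have := hb; rewrite /NN; lra.
have um := uu_gt0 m; have um1 := uu_gt0 m.+1.
have H : (x - 1) * TT m x = (Rf m.+1 x - Rf m x) / uu m.
  by rewrite IH; field; apply: lt0r_neq0.
rewrite /TT big_ord_recr /= -/(TT m x).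
rewrite (_ : (x - 1) * (uu m.+1 * (TT m x + vv m.+1 * Rf m.+1 x)) =
   uu m.+1 * ((x - 1) * TT m x) + (-2 * uu m.+1 * vv m.+1) * (t * Rf m.+1 x)); last first.
  by rewrite xt; ring.
have S1' : t * Rf m.+1 x = \sum_(k < m.+2) cf m.+1 k * t ^+ k.+1.
  by rewrite /Rf mulr_sumr; apply: eq_bigr => k _; rewrite exprS; ring.
rewrite H S1'.
have S2 : Rf m.+2 x = 1 + \sum_(k < m.+2) cf m.+2 k.+1 * t ^+ k.+1.
  by rewrite /Rf big_ord_recl cf0 expr0 mulr1.
have S1 : Rf m.+1 x = 1 + \sum_(k < m.+2) cf m.+1 k.+1 * t ^+ k.+1.
  by rewrite (Rf_ext _ (K := m.+3)) // big_ord_recl cf0 expr0 mulr1.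
have S0 : Rf m x = 1 + \sum_(k < m.+2) cf m k.+1 * t ^+ k.+1.
  by rewrite (Rf_ext _ (K := m.+3)) ?(leq_trans (leqnSn m.+1) (leqnSn m.+2)) // big_ord_recl cf0 expr0 mulr1.
rewrite S2 S1 S0.
set s2 := \sum_(k < m.+2) cf m.+2 k.+1 * t ^+ k.+1.
set s1 := \sum_(k < m.+2) cf m.+1 k.+1 * t ^+ k.+1.
set s0 := \sum_(k < m.+2) cf m k.+1 * t ^+ k.+1.
set s' := \sum_(k < m.+2) cf m.+1 k * t ^+ k.+1.
have E : s2 = s1 + uu m.+1 / uu m * (s1 - s0) + (-2 * uu m.+1 * vv m.+1) * s'.
  rewrite /s2 /s1 /s0 /s' -sumrB !mulr_sumr -!big_split /=.
  apply: eq_bigr => k _.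
  have := coef_id m k => C.
  have -> : cf m.+2 k.+1 = cf m.+1 k.+1 + (uu m.+1 / uu m * (cf m.+1 k.+1 - cf m k.+1) -
      2 * uu m.+1 * vv m.+1 * cf m.+1 k) by rewrite -C; ring.
  ring.
by rewrite E; field; apply: lt0r_neq0.
Qed.

End Jac.


Section Mx.
Variable R : comRingType.

Lemma det_mul_expand m K (W : 'M[R]_(m, K)) (G : 'M[R]_(K, m)) :
  \det (W *m G) = \sum_(f : {ffun 'I_m -> 'I_K})
     (\prod_i W i (f i)) * \det (\matrix_(i, j) G (f i) j).
Proof.
rewrite /determinant.
rewrite (eq_bigr (fun s : {perm 'I_m} => \sum_(f : {ffun 'I_m -> 'I_K})
    (-1) ^+ s * \prod_i (W i (f i) * G (f i) (s i)))); last first.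
  move=> s _; rewrite -mulr_sumr -(bigA_distr_bigA (fun i k => W i k * G k (s i))); congr (_ * _).
  by apply: eq_bigr => i _; rewrite mxE.
rewrite exchange_big /=; apply: eq_bigr => f _.
rewrite mulr_sumr; apply: eq_bigr => s _.
rewrite big_split /= mulrCA; congr (_ * (_ * _)).
by apply: eq_bigr => i _; rewrite mxE.
Qed.

Lemma det_scale_cols m (c : 'I_m -> R) (A : 'M[R]_m) :
  \det (\matrix_(i, j) (c j * A i j)) = (\prod_j c j) * \det A.
Proof.
have -> : \matrix_(i, j) (c j * A i j) = A *m diag_mx (\row_j c j).
  by rewrite mul_mx_diag; apply/matrixP => i j; rewrite !mxE mulrC.
by rewrite det_mulmx det_diag mulrC; congr (_ * _); apply: eq_bigr => j _; rewrite mxE.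
Qed.

Lemma det_scale_rows m (c : 'I_m -> R) (A : 'M[R]_m) :
  \det (\matrix_(i, j) (c i * A i j)) = (\prod_i c i) * \det A.
Proof.
have -> : \matrix_(i, j) (c i * A i j) = diag_mx (\row_j c j) *m A.
  by rewrite mul_diag_mx; apply/matrixP => i j; rewrite !mxE.
by rewrite det_mulmx det_diag; congr (_ * _); apply: eq_bigr => j _; rewrite mxE.
Qed.

Lemma det_rowop n (A : 'M[R]_n.+1) (th : nat -> R) :
  \det (\matrix_(i, j) (if (i.+1 < n.+1)%N then A i j - th i * A (inord i.+1) j
                        else A i j)) = \det A.
Proof.
pose N : 'M[R]_n.+1 := \matrix_(i, k)
   (if (i.+1 < n.+1)%N then th i * ((k : nat) == i.+1)%:R else 0).
have -> : \matrix_(i, j) (if (i.+1 < n.+1)%N then A i j - th i * A (inord i.+1) j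
                        else A i j) = (1%:M - N) *m A.
  apply/matrixP => i j; rewrite mulmxBl mul1mx !mxE.
  case: ifP => hi.
    congr (_ - _).
    rewrite (bigD1 (inord i.+1)) //= big1 ?addr0.
      by rewrite !mxE hi inordK // eqxx mulr1.
    move=> k hk; rewrite !mxE hi.
    have -> : ((k : nat) == i.+1) = false.
      apply/negbTE; apply: contra hk => /eqP e; apply/eqP/val_inj.
      by rewrite /= inordK // -e.
    by rewrite mulr0 mul0r.
  rewrite big1 ?subr0 // => k _; by rewrite !mxE hi mul0r.
rewrite det_mulmx -det_tr det_trig.
  rewrite big1 ?mul1r // => i _.
  rewrite !mxE eqxx /=.
  case: ifP => _; last by rewrite subr0.
  by rewrite (_ : ((i : nat) == i.+1) = false) ?mulr0 ?subr0 // ; apply/negbTE; rewrite neq_ltn ltnSn.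
apply/is_trig_mxP => i j lij; rewrite !mxE.
have -> : (j == i) = false by apply/negbTE; rewrite neq_ltn lij orbT.
case: ifP => _; last by rewrite subr0.
have -> : ((i : nat) == j.+1) = false.
  apply/negbTE; rewrite neq_ltn; apply/orP; left; exact: ltn_trans lij (ltnSn _).
by rewrite mulr0 subr0.
Qed.

End Mx.


Section Util.
Variable R : comRingType.

Lemma sum_range_ind lo hi K (F : nat -> R) : (hi <= K)%N ->
  \sum_(lo <= k < hi) F k = \sum_(k < K) ((lo <= k)%N && (k < hi)%N)%:R * F k.
Proof.
move=> hK; rewrite big_geq_mkord (big_ord_widen_cond K) // big_mkcond /=.
apply: eq_bigr => k _; case: ((lo <= k) && (k < hi))%N; by rewrite ?mul1r ?mul0r.
Qed.

Lemma vdm_split m (y : nat -> R) :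
  \prod_(i < m.+1) \prod_(j < m.+1 | (i < j)%N) (y i - y j) =
  (\prod_(i < m) \prod_(j < m | (i < j)%N) (y i - y j)) * \prod_(i < m) (y i - y m).
Proof.
rewrite big_ord_recr /= [X in _ * X]big1 ?mulr1; last first.
  by move=> j; rewrite ltnNge -ltnS ltn_ord.
rewrite -big_split /=; apply: eq_bigr => i _.
rewrite big_mkcond big_ord_recr /= ltn_ord -big_mkcond /=; congr (_ * _).
Qed.

End Util.

Section Collect.
Variable R : realDomainType.

Lemma collect (I : finType) (c : I -> R) (key : I -> seq nat) (val : seq nat -> R) :
  \sum_i c i * val (key i) =
  \sum_(nu <- undup [seq key i | i <- enum [pred i | c i != 0]])
     (\sum_(i | (c i != 0) && (key i == nu)) c i) * val nu.
Proof.
set s := undup _.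
have us : uniq s by apply: undup_uniq.
rewrite (bigID (fun i => c i != 0)) /= [X in _ + X]big1 ?addr0; last first.
  by move=> i /negPn /eqP ->; rewrite mul0r.
under [RHS]eq_bigr => nu _ do rewrite mulr_suml big_mkcond /=.
rewrite [RHS]exchange_big /= big_mkcond /=; apply: eq_bigr => i _.
case: ifP => ci; last first.
  by rewrite big1 // => nu _; rewrite ci.
have ki : key i \in s by rewrite mem_undup; apply/mapP; exists i; rewrite ?mem_enum.
rewrite -big_mkcond -big_filter /=.
have -> : [seq nu <- s | key i == nu] = [:: key i].
  have : perm_eq [seq nu <- s | key i == nu] [:: key i].
    apply: uniq_perm; rewrite ?filter_uniq //.
    by move=> z; rewrite mem_filter inE eq_sym; case: eqP => // ->; rewrite ki.
  by move/perm_small_eq => -> //.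
by rewrite big_seq1.
Qed.

End Collect.


Section Main.
Variable R : realType.
Variables a b : R.
Hypothesis ha : -1 < a.
Hypothesis hb : -1 < b.

Lemma hh_gt0 l : 0 < hh a l.
Proof.
rewrite /hh divr_gt0 ?poch_gt0 ?ltr0n ?fact_gt0 //; have := ha; lra.
Qed.

Lemma hh_neq0 l : hh a l != 0.
Proof. exact: lt0r_neq0 (hh_gt0 l). Qed.

Lemma Rf1 l : Rf a b l 1 = 1.
Proof.
rewrite /Rf big_ord_recl cf0 subrr mul0r expr0 mulr1 big1 ?addr0 // => k _.
by rewrite expr0n /= mulr0.
Qed.

Lemma jac1 l : jacobi a b l 1 = hh a l.
Proof. by rewrite jacobiE Rf1 mulr1. Qed.

Lemma entry1 lo hi K (z : R) : (lo <= hi)%N -> (hi <= K)%N ->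
  jacobi a b hi z - hh a hi / hh a lo * jacobi a b lo z =
  (z - 1) * \sum_(k < K) (hh a hi * ((lo <= k)%N && (k < hi)%N)%:R) *
                          (uu a b k * TT a b k z).
Proof.
move=> lh hK.
have D : Rf a b hi z - Rf a b lo z =
    (z - 1) * \sum_(lo <= k < hi) uu a b k * TT a b k z.
  rewrite -(telescope_sumr (fun k => Rf a b k z)) // mulr_sumr.
  by apply: eq_bigr => k _; rewrite key.
have E : \sum_(k < K) (hh a hi * ((lo <= k)%N && (k < hi)%N)%:R) *
                          (uu a b k * TT a b k z) =
    hh a hi * \sum_(lo <= k < hi) uu a b k * TT a b k z.
  rewrite (sum_range_ind _ _ hK) mulr_sumr; apply: eq_bigr => k _; ring.
rewrite E !jacobiE.
have -> : Rf a b hi z = Rf a b lo z + (z - 1) * \sum_(lo <= k < hi) uu a b k * TT a b k z.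
  by rewrite -D; ring.
by field; apply: hh_neq0.
Qed.


Lemma TT_ind q K (z : R) : (q < K)%N ->
  TT a b q z = \sum_(k < K) (vv a b k * (k <= q)%N%:R) * Rf a b k z.
Proof.
move=> qK; rewrite /TT.
have -> : \sum_(k < q.+1) vv a b k * Rf a b k z = \sum_(0 <= k < q.+1) vv a b k * Rf a b k z.
  by rewrite big_mkord.
rewrite (sum_range_ind _ _ qK); apply: eq_bigr => k _; rewrite leq0n /=; ring.
Qed.

Lemma entry2 lo hi K (z : R) : (lo < hi)%N -> (hi < K)%N ->
  TT a b hi z - 1 * TT a b lo z =
  \sum_(k < K) (vv a b k * ((lo < k)%N && (k <= hi)%N)%:R) * Rf a b k z.
Proof.
move=> lh hK; rewrite mul1r (TT_ind z hK) (TT_ind z (ltn_trans lh hK)) -sumrB.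
apply: eq_bigr => k _.
case: (leqP k lo) => kl /=.
  by rewrite (leq_trans kl (ltnW lh)) (_ : true%:R = 1 :> R) // subrr mulr0 mul0r.
by rewrite mulr0 mul0r subr0.
Qed.

Lemma ind_neq0 (bb : bool) : (bb%:R != 0 :> R) -> bb.
Proof. by case: bb => //=; rewrite eqxx. Qed.

Lemma main_exp m (lam : seq nat) : is_partition m.+2 lam ->
  exists (s : seq (seq nat)) (c : seq nat -> R),
    [/\ uniq s, all (is_partition m.+1) s, (forall nu, nu \in s -> 0 <= c nu) &
        forall x : nat -> R, (forall i, (i < m.+1)%N -> x i != 1) ->
          multiJacobi a b m.+2 lam (fun j => if j == m.+1 then 1 else x j)
          = \sum_(nu <- s) c nu * multiJacobi a b m.+1 nu x].
Proof.
move=> /andP [/eqP sz srt].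
pose L i := (nth 0 lam i + (m.+2 - i.+1))%N.
have Ldec : forall i, (i < m.+1)%N -> (L i.+1 < L i)%N.
  move=> i hi; have := (sortedP 0%N srt) i; rewrite sz /L => /(_ hi) /=; lia.
pose K := (\max_(i < m.+2) L i).+1.
have LK : forall i, (i < m.+2)%N -> (L i < K)%N.
  by move=> i hi; rewrite ltnS (leq_bigmax_cond (Ordinal hi)).
pose W1 : 'M[R]_(m.+1, K) :=
  \matrix_(i, k) (hh a (L i) * ((L i.+1 <= k)%N && (k < L i)%N)%:R).
pose W2 (f : {ffun 'I_m.+1 -> 'I_K}) : 'M[R]_(m.+1, K) :=
  \matrix_(i, k) (vv a b k * ((if (i.+1 < m.+1)%N then (f (inord i.+1) < k)%N else true)
                               && (k <= f i)%N)%:R).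
pose coef (q : {ffun 'I_m.+1 -> 'I_K} * {ffun 'I_m.+1 -> 'I_K}) :=
  hh a (L m.+1) * ((\prod_i W1 i (q.1 i)) * (\prod_i uu a b (q.1 i)) *
    ((\prod_i W2 q.1 i (q.2 i)) * \prod_i (hh a (q.2 i))^-1)).
pose nu (g : {ffun 'I_m.+1 -> 'I_K}) : seq nat :=
  mkseq (fun i => g (inord i) - (m.+1 - i.+1))%N m.+1.
have coef_ge0 : forall q, 0 <= coef q.
  move=> q; rewrite /coef.
  apply: mulr_ge0; first exact: ltW (hh_gt0 _).
  apply: mulr_ge0; apply: mulr_ge0; apply: prodr_ge0 => i _; rewrite ?mxE.
  - by apply: mulr_ge0; [exact: ltW (hh_gt0 _) | exact: ler0n].
  - exact: ltW (uu_gt0 ha hb _).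
  - by apply: mulr_ge0; [exact: ltW (vv_gt0 ha hb _) | exact: ler0n].
  - by rewrite invr_ge0; exact: ltW (hh_gt0 _).
have valid : forall q, coef q != 0 ->
   is_partition m.+1 (nu q.2) /\
   forall i : 'I_m.+1, (nth 0%N (nu q.2) i + (m.+1 - i.+1))%N = q.2 i.
  move=> q; rewrite /coef !mulf_eq0 !negb_or.
  move=> /andP [_ /andP [/andP [/prodf_neq0 w1 _] /andP [/prodf_neq0 w2 _]]].
  have An : forall i, (i < m.+1)%N -> (L i.+1 <= q.1 (inord i) < L i)%N.
    move=> i hi; have := w1 (inord i) isT; rewrite mxE mulf_eq0 negb_or inordK //.
    by case/andP => _ /ind_neq0.
  have Bn : forall i, (i < m.+1)%N ->
      ((i.+1 < m.+1)%N -> (q.1 (inord i.+1) < q.2 (inord i))%N) /\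
      (q.2 (inord i) <= q.1 (inord i))%N.
    move=> i hi; have := w2 (inord i) isT; rewrite mxE mulf_eq0 negb_or inordK //.
    case/andP => _ /ind_neq0 /andP [h1 h2]; split => // h; by rewrite h in h1.
  have bnd : forall i, (i < m.+1)%N -> (m - i <= q.2 (inord i))%N.
    move=> i hi; case: (ltnP i.+1 m.+1) => h.
      have [h1 _] := Bn i hi; have := h1 h; have := An i.+1 h; rewrite /L; lia.
    lia.
  have nthE : forall i, (i < m.+1)%N -> (nth 0%N (nu q.2) i + (m.+1 - i.+1))%N = q.2 (inord i).
    move=> i hi; rewrite /nu nth_mkseq //; have := bnd i hi; lia.
  split; last by move=> i; rewrite nthE // inord_val.
  rewrite /is_partition size_mkseq eqxx andTb.
  apply/(sortedP 0%N) => i; rewrite size_mkseq => hi.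
  rewrite /nu !nth_mkseq //; last exact: ltnW.
  have [h1 _] := Bn i (ltnW hi); have [_ h2] := Bn i.+1 hi; have := bnd i.+1 hi.
  have := h1 hi; rewrite /=; lia.
exists (undup [seq nu q.2 | q <- enum [pred q | coef q != 0]]).
exists (fun ν => \sum_(q | (coef q != 0) && (nu q.2 == ν)) coef q).
split.
- exact: undup_uniq.
- apply/allP => ν; rewrite mem_undup => /mapP [q]; rewrite mem_enum inE => cq ->.
  by case: (valid q cq).
- by move=> ν _; apply: sumr_ge0 => q _.
move=> x hx.
pose G1 : 'M[R]_(K, m.+1) := \matrix_(k, j) (uu a b k * TT a b k (x j)).
pose G2 : 'M[R]_(K, m.+1) := \matrix_(k, j) Rf a b k (x j).
pose Vm := \prod_(i < m.+1) \prod_(j < m.+1 | (i < j)%N) (x i - x j).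
pose MJ (g : {ffun 'I_m.+1 -> 'I_K}) :=
  \det (\matrix_(i, j) jacobi a b (g i) (x j)) / Vm.
have S1 : \det (\matrix_(i < m.+2, j < m.+2) jacobi a b (nth 0%N lam i + (m.+2 - i.+1))
             ((fun j : nat => if j == m.+1 then 1 else x j) j)) =
          hh a (L m.+1) * ((\prod_(j < m.+1) (x j - 1)) * \det (W1 *m G1)).
  rewrite -(det_rowop _ (fun i => hh a (L i) / hh a (L i.+1))).
  rewrite (expand_det_col _ ord_max) (bigD1 ord_max) //= big1 ?addr0; last first.
    move=> i ni.
    have hi : (i < m.+1)%N.
      have : (i : nat) != m.+1 by apply: contra ni => /eqP e; apply/eqP/val_inj.
      have := ltn_ord i; lia.
    rewrite !mxE ltnS hi eqxx !jac1 inordK ?ltnS //.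
    have := hh_neq0 (L i.+1); rewrite /L => nz.
    by rewrite divfK // subrr mul0r.
  rewrite !mxE ltnn eqxx jac1.
  rewrite /cofactor /= -signr_odd oddD addbb expr0 mul1r.
  have -> : row' ord_max (col' ord_max (\matrix_(i, j) (if (i.+1 < m.+2)%N
      then (\matrix_(i0 < m.+2, j0 < m.+2) jacobi a b (nth 0%N lam i0 + (m.+2 - i0.+1))
              ((fun j1 : nat => if j1 == m.+1 then 1 else x j1) j0)) i j -
           (fun i1 => hh a (L i1) / hh a (L i1.+1)) i *
           (\matrix_(i0 < m.+2, j0 < m.+2) jacobi a b (nth 0%N lam i0 + (m.+2 - i0.+1))
              ((fun j1 : nat => if j1 == m.+1 then 1 else x j1) j0)) (inord i.+1) j
      else (\matrix_(i0 < m.+2, j0 < m.+2) jacobi a b (nth 0%N lam i0 + (m.+2 - i0.+1))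
              ((fun j1 : nat => if j1 == m.+1 then 1 else x j1) j0)) i j)))
      = \matrix_(i, j) ((x j - 1) * (W1 *m G1) i j).
    apply/matrixP => i j; rewrite !mxE !lift_max /= ltnS ltn_ord (ltn_eqF (ltn_ord j)).
    rewrite inordK; last exact: ltn_ord i.
    apply: eq_trans (entry1 (x j) (ltnW (Ldec i (ltn_ord i)))
                                  (ltnW (LK i (leqW (ltn_ord i))))) _.
    by congr (_ * _); apply: eq_bigr => k _; rewrite !mxE.
  by rewrite det_scale_cols.
have S2 : \prod_(i < m.+2) \prod_(j < m.+2 | (i < j)%N)
      ((fun j : nat => if j == m.+1 then 1 else x j) i -
       (fun j : nat => if j == m.+1 then 1 else x j) j) =
    Vm * \prod_(i < m.+1) (x i - 1).
  rewrite (vdm_split m.+1 (fun j : nat => if j == m.+1 then 1 else x j)) /=; congr (_ * _).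
    apply: eq_bigr => i _; apply: eq_bigr => j _.
    by rewrite !ltn_eqF.
  by apply: eq_bigr => i _; rewrite eqxx ltn_eqF.
have S3 : \det (W1 *m G1) = \sum_(f : {ffun 'I_m.+1 -> 'I_K})
    (\prod_i W1 i (f i)) * ((\prod_i uu a b (f i)) *
       \det (\matrix_(i, j) TT a b (f i) (x j))).
  rewrite det_mul_expand; apply: eq_bigr => f _; congr (_ * _).
  by rewrite -det_scale_rows; congr (\det _); apply/matrixP => i j; rewrite !mxE.
have S4 : forall f : {ffun 'I_m.+1 -> 'I_K}, \prod_i W1 i (f i) != 0 ->
    \det (\matrix_(i, j) TT a b (f i) (x j)) =
    \sum_(g : {ffun 'I_m.+1 -> 'I_K}) (\prod_i W2 f i (g i)) *
       ((\prod_i (hh a (g i))^-1) * \det (\matrix_(i, j) jacobi a b (g i) (x j))).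
  move=> f /prodf_neq0 nz.
  have fdec : forall i : 'I_m.+1, (i.+1 < m.+1)%N -> (f (inord i.+1) < f i)%N.
    move=> i hi.
    have := nz i isT; rewrite mxE mulf_eq0 negb_or => /andP [_ /ind_neq0 /andP [h1 _]].
    have := nz (inord i.+1) isT; rewrite mxE mulf_eq0 negb_or inordK //.
    move=> /andP [_ /ind_neq0 /andP [_ h2]].
    exact: leq_trans h2 h1.
  rewrite -(det_rowop _ (fun _ => 1)).
  have -> : \matrix_(i, j) (if (i.+1 < m.+1)%N
      then (\matrix_(i0, j0) TT a b (f i0) (x j0)) i j -
           (fun _ => 1) i * (\matrix_(i0, j0) TT a b (f i0) (x j0)) (inord i.+1) j
      else (\matrix_(i0, j0) TT a b (f i0) (x j0)) i j) = W2 f *m G2.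
    apply/matrixP => i j; rewrite !mxE.
    case: ifP => hi.
      rewrite (entry2 (x j) (fdec i hi) (ltn_ord (f i))).
      by apply: eq_bigr => k _; rewrite !mxE hi.
    rewrite (TT_ind (x j) (ltn_ord (f i))).
    by apply: eq_bigr => k _; rewrite !mxE hi.
  rewrite det_mul_expand; apply: eq_bigr => g _; congr (_ * _).
  rewrite -det_scale_rows; congr (\det _); apply/matrixP => i j.
  by rewrite !mxE jacobiE mulrA mulVf ?mul1r // hh_neq0.
have P0 : \prod_(i < m.+1) (x i - 1) != 0.
  by apply/prodf_neq0 => i _; rewrite subr_eq0; apply: hx.
rewrite /multiJacobi S1 S2.
have -> : hh a (L m.+1) * (\prod_(j < m.+1) (x j - 1) * \det (W1 *m G1)) /
    (Vm * \prod_(i < m.+1) (x i - 1)) = hh a (L m.+1) * \det (W1 *m G1) / Vm.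
  rewrite invfM; set P := \prod_(i < m.+1) (x i - 1).
  have PP : P * P^-1 = 1 by rewrite divff.
  rewrite -[RHS]mulr1 -PP; ring.
have A : hh a (L m.+1) * \det (W1 *m G1) / Vm = \sum_q coef q * MJ q.2.
  transitivity (\sum_(f : {ffun 'I_m.+1 -> 'I_K}) \sum_(g : {ffun 'I_m.+1 -> 'I_K})
                   coef (f, g) * MJ g); last first.
    by rewrite pair_bigA; apply: eq_bigr => [[f g]] _.
  rewrite S3 mulr_sumr mulr_suml; apply: eq_bigr => f _.
  case: (\prod_i W1 i (f i) =P 0) => [E|/eqP nz].
    rewrite E mul0r mulr0 mul0r; symmetry; apply: big1 => g _.
    by rewrite /coef /= E !mul0r mulr0 mul0r.
  rewrite S4 // !mulr_sumr mulr_suml; apply: eq_bigr => g _.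
  rewrite /coef /MJ /=; ring.
have B : \sum_q coef q * MJ q.2 = \sum_q coef q * multiJacobi a b m.+1 (nu q.2) x.
  apply: eq_bigr => q _; case: (coef q =P 0) => [->|/eqP cq]; first by rewrite !mul0r.
  congr (_ * _); rewrite /MJ /multiJacobi; congr (\det _ / _).
  by apply/matrixP => i j; rewrite !mxE (proj2 (valid q cq)).
rewrite A B (collect coef (fun q => nu q.2) (fun v => multiJacobi a b m.+1 v x)).
by [].
Qed.


End Main.


Theorem proposition7p5 (R : realType) (a b : R) (n : nat) (lam : seq nat) :
  -1 < a -> -1 < b -> (2 <= n)%N -> is_partition n lam ->
  exists (s : seq (seq nat)) (c : seq nat -> R),
    [/\ uniq s, all (is_partition n.-1) s,
        (forall nu, nu \in s -> 0 <= c nu) &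
        forall x : nat -> R,
          (forall i j, (i < n.-1)%N -> (j < n.-1)%N -> i != j -> x i != x j) ->
          (forall i, (i < n.-1)%N -> x i != 1) ->
          multiJacobi a b n lam (fun j => if j == n.-1 then 1 else x j)
          = \sum_(nu <- s) c nu * multiJacobi a b n.-1 nu x].
Proof.
move=> ha hb hn hlam.
case: n hn hlam => [|[|m]] // _ hlam.
have [s [c [us als cpos H]]] := main_exp ha hb hlam.
exists s, c; split => // x _ hx.
exact: H.
Qed.
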